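(* Let $k,\ell,n$ be positive integers with $k+\ell=n$ and let $M,B,N>0$. Let $A$ be the symmetric $n\times n$ matrix whose first $k$ rows all equal $(M,\dots,M,B,\dots,B)$ ($k$ entries $M$ followed by $\ell$ entries $B$) and whose last $\ell$ rows all equal $(B,\dots,B,N,\dots,N)$ ($k$ entries $B$ followed by $\ell$ entries $N$). Put $t=MN/B^2$. Then the Sinkhorn limit $S(A)$ is the block matrix whose entries in the upper-left $k\times k$ block all equal $a$, whose entries in the two off-diagonal blocks ($k\times\ell$ and $\ell\times k$) all equal $b$, and whose entries in the lower-right $\ell\times\ell$ block all equal $c$, where: if $t=1$, then $a=b=c=1/n$; and if $t\neq 1$, then \[ a=\frac1k+\frac{n-\sqrt{4k\ell t+(k-\ell)^2}}{2k^2(t-1)},\qquad b=\frac{1-ka}{\ell},\qquad c=\frac{1-kb}{\ell}=\frac{\ell-k+k^2a}{\ell^2}. \] In particular $S(A)$ depends only on the ratio $MN/B^2$.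
   Context: A matrix is doubly stochastic if it is nonnegative with all row and column sums equal to $1$. For a positive $n\times n$ matrix $A$ there exist positive diagonal matrices $X,Y$ with $XAY$ doubly stochastic, and this matrix $XAY$ is unique; it is called the Sinkhorn limit $S(A)$. For symmetric positive $A$ one may take $Y=X$. *)

(* Defs.v *)
From HB Require Import structures.
From mathcomp Require Import all_boot all_order all_algebra.
Set Implicit Arguments. Unset Strict Implicit. Unset Printing Implicit Defensive.
Import Order.TTheory GRing.Theory Num.Theory.
Local Open Scope ring_scope.

Definition doubly_stochastic (R : numDomainType) (n : nat) (S : 'M[R]_n) : Prop :=
  (forall i j, 0 <= S i j) /\
  (forall i, \sum_(j < n) S i j = 1) /\
  (forall j, \sum_(i < n) S i j = 1).

Definition sinkhorn_limit (R : numDomainType) (n : nat) (A S : 'M[R]_n) : Prop :=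
  doubly_stochastic S /\
  exists (x y : 'rV[R]_n),
    (forall i, 0 < x 0 i) /\ (forall i, 0 < y 0 i) /\
    S = diag_mx x *m A *m diag_mx y.

(* Main.v *)
Require Import Defs.
From HB Require Import structures.
From mathcomp Require Import all_boot all_order all_algebra.
From mathcomp Require Import ring lra.
Import Order.TTheory GRing.Theory Num.Theory.
Local Open Scope ring_scope.

Lemma blkE (R : ringType) k l (p q r u : R) (i j : 'I_(k+l)) :
  block_mx (const_mx p : 'M_(k,k)) (const_mx q : 'M_(k,l)) (const_mx r : 'M_(l,k)) (const_mx u : 'M_(l,l)) i j =
  if (i < k)%N then (if (j < k)%N then p else q) else (if (j < k)%N then r else u).
Proof.
have lo : forall x : 'I_k, (lshift l x < k)%N by move=> x; rewrite /= ltn_ord.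
have hi : forall x : 'I_l, (rshift k x < k)%N = false by move=> x; rewrite /= ltnNge leq_addr.
case: (split_ordP i) => i' ->; case: (split_ordP j) => j' ->;
 rewrite ?block_mxEul ?block_mxEur ?block_mxEdl ?block_mxEdr !mxE ?lo ?hi //.
Qed.

Lemma sum_blk (R : ringType) k l (F : 'I_(k+l) -> R) u v :
  (forall j, F j = if (j < k)%N then u else v) ->
  \sum_j F j = k%:R * u + l%:R * v.
Proof.
move=> HF; rewrite big_split_ord.
have E1 : \sum_(i < k) F (lshift l i) = \sum_(i < k) u.
  apply: eq_bigr => x _; rewrite HF; have -> : (lshift l x < k)%N by rewrite /= ltn_ord.
  by [].
have E2 : \sum_(i < l) F (rshift k i) = \sum_(i < l) v.
  apply: eq_bigr => x _; rewrite HF; have -> : (rshift k x < k)%N = false by rewrite /= ltnNge leq_addr.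
  by [].
rewrite E1 E2 !sumr_const !card_ord.
by rewrite !mulr_natl.
Qed.


Lemma uniq_sol (R : realFieldType) (k l t a1 b1 c1 a2 b2 c2 : R) :
  0 < k -> 0 < l -> 0 < t -> 0 < a1 -> 0 < b1 -> 0 < c1 -> 0 < a2 -> 0 < b2 -> 0 < c2 ->
  k * a1 + l * b1 = 1 -> k * b1 + l * c1 = 1 -> a1 * c1 = t * b1 ^+ 2 ->
  k * a2 + l * b2 = 1 -> k * b2 + l * c2 = 1 -> a2 * c2 = t * b2 ^+ 2 ->
  a1 = a2.
Proof.
move=> k0 l0 t0 pa1 pb1 pc1 pa2 pb2 pc2 e1 e2 e3 f1 f2 f3.
wlog lt : a1 b1 c1 a2 b2 c2 pa1 pb1 pc1 pa2 pb2 pc2 e1 e2 e3 f1 f2 f3 / a1 <= a2.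
  move=> H; have [h|h] := lerP a1 a2. by apply: (H a1 b1 c1 a2 b2 c2).
  symmetry; apply: (H a2 b2 c2 a1 b1 c1) => //; exact: ltW.
have eb : l * (b1 - b2) = k * (a2 - a1).
  by rewrite !mulrBr; lra.
have hb : b2 <= b1.
  by rewrite -subr_ge0 -(pmulr_rge0 _ l0) eb; apply: mulr_ge0; [exact: ltW | by rewrite subr_ge0].
have ec : l * (c2 - c1) = k * (b1 - b2).
  by rewrite !mulrBr; lra.
have hc : c1 <= c2.
  by rewrite -subr_ge0 -(pmulr_rge0 _ l0) ec; apply: mulr_ge0; [exact: ltW | by rewrite subr_ge0].
have h1 : a1 * c1 <= a2 * c2 by apply: ler_pM => //; exact: ltW.
have h2 : t * b2 ^+ 2 <= t * b1 ^+ 2.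
  by rewrite ler_pM2l // lerXn2r // ?nnegrE ?ltW.
have eqb : b1 = b2.
  have : t * b1 ^+ 2 = t * b2 ^+ 2 by apply: le_anti; rewrite h2 -e3 -f3 h1.
  move/(mulfI (lt0r_neq0 t0))/eqP; rewrite eqrXn2 ?ltW // => /eqP //.
have : k * (a2 - a1) = 0 by rewrite -eb eqb subrr mulr0.
by move/eqP; rewrite mulf_eq0 (negbTE (lt0r_neq0 k0)) subr_eq0 /= => /eqP.
Qed.

Lemma sys_ok (R: rcfType) (K L t : R) : 0 < K -> 0 < L -> 0 < t -> t != 1 ->
  let s := Num.sqrt (4 * K * L * t + (K - L) ^+ 2) in
  let a := 1 / K + ((K + L) - s) / (2 * K ^+ 2 * (t - 1)) in
  let b := (1 - K * a) / L in
  let c := (1 - K * b) / L in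
  0 < a /\ 0 < b /\ 0 < c /\ K * a + L * b = 1 /\ K * b + L * c = 1 /\ a * c = t * b ^+ 2.
Proof.
move=> K0 L0 t0 t1 s a b c.
have D0 : 0 <= 4 * K * L * t + (K - L) ^+ 2.
  by apply: addr_ge0; [rewrite !mulr_ge0 // ltW | exact: sqr_ge0].
have s0 : 0 <= s by exact: sqrtr_ge0.
have s2 : s ^+ 2 = 4 * K * L * t + (K - L) ^+ 2 by exact: sqr_sqrtr.
have ns0 : 0 < K + L + s by rewrite ltr_wpDr // addr_gt0.
have nsz : K + L + s != 0 by rewrite gt_eqF.
have uv : (s + (K - L)) * (s - (K - L)) = 4 * K * L * t.
  by rewrite mulrC -subr_sqr s2; ring.
have uvp : 0 < (s + (K - L)) * (s - (K - L)) by rewrite uv !mulr_gt0.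
have u0 : 0 < s + (K - L).
  rewrite ltNge; apply/negP => hu.
  have hv : 0 <= s - (K - L) by lra.
  by move: uvp; rewrite ltNge mulr_le0_ge0.
have v0 : 0 < s - (K - L).
  rewrite ltNge; apply/negP => hv.
  have hu : 0 <= s + (K - L) by lra.
  by move: uvp; rewrite ltNge mulr_ge0_le0.
have Kz : K != 0 by rewrite gt_eqF.
have Lz : L != 0 by rewrite gt_eqF.
have tz : t - 1 != 0 by rewrite subr_eq0.
have hns : (K + L - s) = 4 * K * L * (1 - t) / (K + L + s).
  apply: (mulIf nsz); rewrite mulfVK //.
  by rewrite -subr_sqr s2; ring.
have ea : a = (s + (K - L)) / (K * (K + L + s)).
  by rewrite /a hns; field; rewrite ?nsz ?Kz ?tz.
have eb : b = 2 / (K + L + s).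
  by rewrite /b ea; field; rewrite ?nsz ?Kz ?Lz.
have ec : c = (s - (K - L)) / (L * (K + L + s)).
  by rewrite /c eb; field; rewrite ?nsz ?Kz ?Lz.
split; [|split; [|split; [|split; [|split]]]].
- by rewrite ea divr_gt0 // mulr_gt0.
- by rewrite eb divr_gt0.
- by rewrite ec divr_gt0 // mulr_gt0.
- by rewrite /b; field.
- by rewrite /c; field.
- rewrite ea eb ec.
  have -> : (s + (K - L)) / (K * (K + L + s)) * ((s - (K - L)) / (L * (K + L + s)))
      = ((s + (K - L)) * (s - (K - L))) / (K * L * (K + L + s) ^+ 2) by field; rewrite ?nsz ?Kz ?Lz.
  by rewrite uv; field; rewrite ?nsz ?Kz ?Lz.
Qed.

Lemma sum_if_mul (R : ringType) k l (u v : R) (z : 'I_(k+l) -> R) :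
  \sum_(j < k + l) ((if (j < k)%N then u else v) * z j) =
  u * (\sum_(j < k + l) (if (j < k)%N then z j else 0)) + v * (\sum_(j < k + l) (if (j < k)%N then 0 else z j)).
Proof.
rewrite !mulr_sumr -big_split; apply: eq_bigr => j _.
by case: (j < k)%N; rewrite /= ?mulr0 ?addr0 ?add0r.
Qed.

Lemma const_blocks (R : fieldType) k l (z : 'I_(k+l) -> R) (P1 P2 : R) (i1 i2 : 'I_(k+l)) :
  (i1 < k)%N -> ~~ (i2 < k)%N ->
  (forall i, z i * (if (i < k)%N then P1 else P2) = 1) ->
  forall i, z i = if (i < k)%N then z i1 else z i2.
Proof.
move=> h1 h2 H i.
have := H i1; have := H i2; have := H i; rewrite h1 (negbTE h2).
case: (i < k)%N => e e2 e1.
- have nz : P1 != 0 by apply/eqP => P0; move: e1; rewrite P0 mulr0 => /eqP; rewrite eq_sym oner_eq0.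
  by apply: (mulIf nz); rewrite e e1.
- have nz : P2 != 0 by apply/eqP => P0; move: e2; rewrite P0 mulr0 => /eqP; rewrite eq_sym oner_eq0.
  by apply: (mulIf nz); rewrite e e2.
Qed.

Theorem mainTheorem5 (R : rcfType) (k l : nat) (M B N : R) :
  (0 < k)%N -> (0 < l)%N -> 0 < M -> 0 < B -> 0 < N ->
  let n := (k + l)%N in
  let A : 'M[R]_(k + l) :=
    block_mx (const_mx M) (const_mx B) (const_mx B) (const_mx N) in
  let t := M * N / B ^+ 2 in
  let a := if t == 1 then 1 / n%:R
           else 1 / k%:R + (n%:R - Num.sqrt (4 * k%:R * l%:R * t + (k%:R - l%:R) ^+ 2))
                           / (2 * k%:R ^+ 2 * (t - 1)) in
  let b := if t == 1 then 1 / n%:R else (1 - k%:R * a) / l%:R in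
  let c := if t == 1 then 1 / n%:R else (1 - k%:R * b) / l%:R in
  (forall S : 'M[R]_(k + l),
     sinkhorn_limit A S <->
     S = block_mx (const_mx a) (const_mx b) (const_mx b) (const_mx c)) /\
  (t != 1 -> c = (l%:R - k%:R + k%:R ^+ 2 * a) / l%:R ^+ 2).
Proof.
move=> k0 l0 M0 B0 N0 n A t a b c.
have K0 : 0 < k%:R :> R by rewrite ltr0n.
have L0 : 0 < l%:R :> R by rewrite ltr0n.
have Kz : k%:R != 0 :> R by rewrite gt_eqF.
have Lz : l%:R != 0 :> R by rewrite gt_eqF.
have Bz : B != 0 by rewrite gt_eqF.
have Mz : M != 0 by rewrite gt_eqF.
have t0 : 0 < t by rewrite /t divr_gt0 ?mulr_gt0 ?exprn_gt0.
have Hb : t != 1 -> b = (1 - k%:R * a) / l%:R by rewrite /b => /negbTE ->.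
have Hc : t != 1 -> c = (1 - k%:R * b) / l%:R by rewrite /c => /negbTE ->.
split; last first.
  by move=> t1; rewrite (Hc t1) (Hb t1); field.
have [a0 [b0 [c0 [e1 [e2 e3]]]]] : 0 < a /\ 0 < b /\ 0 < c /\ k%:R * a + l%:R * b = 1 /\
    k%:R * b + l%:R * c = 1 /\ a * c = t * b ^+ 2.
  have [t1|t1] := eqVneq t 1.
    have n0 : 0 < n%:R :> R by rewrite ltr0n addn_gt0 k0.
    have nz : n%:R != 0 :> R by rewrite gt_eqF.
    have KLz : k%:R + l%:R != 0 :> R by rewrite -natrD.
    have KL0 : 0 < k%:R + l%:R :> R by rewrite addr_gt0.
    rewrite /c /b /a t1 eqxx /n natrD.
    split; [|split; [|split; [|split; [|split]]]].
    - by rewrite divr_gt0.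
    - by rewrite divr_gt0.
    - by rewrite divr_gt0.
    - by field.
    - by field.
    - by field.
  have := @sys_ok R k%:R l%:R t K0 L0 t0 t1.
  rewrite (Hc t1) (Hb t1) /a (negbTE t1) /n natrD /=.
  by [].
have ec : c = M * N * b ^+ 2 / (B ^+ 2 * a).
  apply: (mulIf (lt0r_neq0 a0)); rewrite mulrC e3 /t; field.
  by rewrite Bz (lt0r_neq0 a0).
have Aij : forall i j, A i j = if (i < k)%N then (if (j < k)%N then M else B)
                                else (if (j < k)%N then B else N).
  by move=> i j; rewrite /A blkE.
move=> S; split.
- case=> [[Sp [Srow Scol]] [x [y [xp [yp HS]]]]].
  have Sij : forall i j, S i j = x 0 i * A i j * y 0 j.
    by move=> i j; rewrite HS mul_mx_diag mxE mul_diag_mx mxE.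
  pose i1 : 'I_(k + l) := lshift l (Ordinal k0).
  pose i2 : 'I_(k + l) := rshift k (Ordinal l0).
  have h1 : (i1 < k)%N by [].
  have h2 : ~~ (i2 < k)%N by rewrite /= addn0 ltnn.
  have hx : forall i, x 0 i = if (i < k)%N then x 0 i1 else x 0 i2.
    refine (@const_blocks R k l (fun i => x 0 i)
      (M * (\sum_(j < k + l) (if (j < k)%N then y 0 j else 0)) + B * (\sum_(j < k + l) (if (j < k)%N then 0 else y 0 j)))
      (B * (\sum_(j < k + l) (if (j < k)%N then y 0 j else 0)) + N * (\sum_(j < k + l) (if (j < k)%N then 0 else y 0 j)))
      i1 i2 h1 h2 _) => i.
    rewrite -(Srow i).
    have -> : (if (i < k)%N then
       M * (\sum_(j < k + l) (if (j < k)%N then y 0 j else 0)) + B * (\sum_(j < k + l) (if (j < k)%N then 0 else y 0 j))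
      else B * (\sum_(j < k + l) (if (j < k)%N then y 0 j else 0)) + N * (\sum_(j < k + l) (if (j < k)%N then 0 else y 0 j)))
      = \sum_(j < k + l) (A i j * y 0 j).
      rewrite [RHS](eq_bigr (fun j : 'I_(k + l) => (if (j < k)%N then (if (i < k)%N then M else B) else (if (i < k)%N then B else N)) * y 0 j)); last first.
        by move=> j _; rewrite Aij; case: (i < k)%N; case: (j < k)%N.
      by rewrite sum_if_mul; case: (i < k)%N.
    by rewrite mulr_sumr; apply: eq_bigr => j _; rewrite Sij mulrA.
  have hy : forall j, y 0 j = if (j < k)%N then y 0 i1 else y 0 i2.
    refine (@const_blocks R k l (fun j => y 0 j)
      (M * (\sum_(i < k + l) (if (i < k)%N then x 0 i else 0)) + B * (\sum_(i < k + l) (if (i < k)%N then 0 else x 0 i)))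
      (B * (\sum_(i < k + l) (if (i < k)%N then x 0 i else 0)) + N * (\sum_(i < k + l) (if (i < k)%N then 0 else x 0 i)))
      i1 i2 h1 h2 _) => j.
    rewrite -(Scol j).
    have -> : (if (j < k)%N then
       M * (\sum_(i < k + l) (if (i < k)%N then x 0 i else 0)) + B * (\sum_(i < k + l) (if (i < k)%N then 0 else x 0 i))
      else B * (\sum_(i < k + l) (if (i < k)%N then x 0 i else 0)) + N * (\sum_(i < k + l) (if (i < k)%N then 0 else x 0 i)))
      = \sum_(i < k + l) (A i j * x 0 i).
      rewrite [RHS](eq_bigr (fun i : 'I_(k + l) => (if (i < k)%N then (if (j < k)%N then M else B) else (if (j < k)%N then B else N)) * x 0 i)); last first.
        by move=> i _; rewrite Aij; case: (i < k)%N; case: (j < k)%N.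
      by rewrite sum_if_mul; case: (j < k)%N.
    by rewrite mulr_sumr; apply: eq_bigr => i _; rewrite Sij; ring.
  set p := x 0 i1; set q := x 0 i2; set r := y 0 i1; set s := y 0 i2.
  have pp : 0 < p by apply: xp.
  have qp : 0 < q by apply: xp.
  have rp : 0 < r by apply: yp.
  have sp : 0 < s by apply: yp.
  have Sblk : forall i j, S i j = if (i < k)%N then (if (j < k)%N then p * M * r else p * B * s)
                                  else (if (j < k)%N then q * B * r else q * N * s).
    by move=> i j; rewrite Sij hx hy Aij; case: (i < k)%N; case: (j < k)%N.
  have r1 := Srow i1; have r2 := Srow i2; have c1 := Scol i1; have c2 := Scol i2.
  rewrite (@sum_blk R k l _ (p * M * r) (p * B * s)) in r1; last by move=> j; rewrite Sblk h1.
  rewrite (@sum_blk R k l _ (q * B * r) (q * N * s)) in r2; last by move=> j; rewrite Sblk (negbTE h2).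
  rewrite (@sum_blk R k l _ (p * M * r) (q * B * r)) in c1; last by move=> i; rewrite Sblk h1; case: (i < k)%N.
  rewrite (@sum_blk R k l _ (p * B * s) (q * N * s)) in c2; last by move=> i; rewrite Sblk (negbTE h2); case: (i < k)%N.
  have eb12 : q * B * r = p * B * s.
    apply: (mulfI Lz); apply: (addrI (k%:R * (p * M * r))); by rewrite c1 r1.
  have ea : p * M * r = a.
    apply: (@uniq_sol R k%:R l%:R t (p * M * r) (p * B * s) (q * N * s) a b c K0 L0 t0 _ _ _ a0 b0 c0 r1 c2 _ e1 e2 e3).
    - by rewrite !mulr_gt0.
    - by rewrite !mulr_gt0.
    - by rewrite !mulr_gt0.
    - rewrite expr2 -{2}eb12 /t; field.
      by rewrite Bz.
  have eb : p * B * s = b.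
    apply: (mulfI Lz); apply: (addrI (k%:R * a)); by rewrite e1 -ea r1.
  have ecc : q * N * s = c.
    apply: (mulfI Lz); apply: (addrI (k%:R * b)); by rewrite e2 -eb c2.
  apply/matrixP => i j; rewrite Sblk blkE ea eb eb12 eb ecc.
  by case: (i < k)%N; case: (j < k)%N.
- move=> ->; split.
    split.
      by move=> i j; rewrite blkE; case: (i < k)%N; case: (j < k)%N; apply: ltW.
    split.
      move=> i; case hi: (i < k)%N.
        by rewrite (@sum_blk R k l _ (a) (b)) // => j; rewrite blkE hi.
      by rewrite (@sum_blk R k l _ (b) (c)) // => j; rewrite blkE hi.
    move=> j; case hj: (j < k)%N.
      by rewrite (@sum_blk R k l _ (a) (b)) // => i; rewrite blkE hj.
    by rewrite (@sum_blk R k l _ (b) (c)) // => i; rewrite blkE hj.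
  exists (\row_i (if (i < k)%N then 1 else b * M / (B * a))).
  exists (\row_j (if (j < k)%N then a / M else b / B)).
  split.
    by move=> i; rewrite mxE; case: (i < k)%N; [exact: ltr01 | rewrite divr_gt0 ?mulr_gt0].
  split.
    by move=> j; rewrite mxE; case: (j < k)%N; rewrite ?divr_gt0.
  apply/matrixP => i j; rewrite blkE mul_mx_diag mxE mul_diag_mx mxE Aij !mxE.
  case: (i < k)%N; case: (j < k)%N.
  + by field.
  + by field.
  + by field; rewrite Bz Mz (lt0r_neq0 a0).
  + by rewrite ec; field; rewrite Bz (lt0r_neq0 a0).
Qed.
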